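(* Let $\mathbf K$ be an M$\Delta$C generated as a thick subcategory by a single object $G$. Then the quasicompact open subsets of $\operatorname{Spc}\mathbf K$ are exactly the sets $\operatorname{Spc}\mathbf K\setminus V(A)$ for objects $A\in\mathbf K$.
   Context: M$\Delta$C: triangulated category with monoidal structure $(\otimes,\mathbf 1)$, $\otimes$ exact in each variable. ''Generated by $G$ as a thick subcategory'': the smallest full triangulated subcategory closed under direct summands containing $G$ is $\mathbf K$. Prime ideal: proper thick two-sided ideal $\mathbf P$ with $\mathbf I\otimes\mathbf J\subseteq\mathbf P\Rightarrow\mathbf I\subseteq\mathbf P$ or $\mathbf J\subseteq\mathbf P$. $\operatorname{Spc}\mathbf K$: set of primes with closed sets the intersections $V(\mathcal S)=\bigcap_{A\in\mathcal S}V(A)$ of $V(A)=\{\mathbf P:A\notin\mathbf P\}$. *)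

(* Defs.v *)
From mathcomp Require Import all_boot all_algebra.
From Stdlib Require List.
Import GRing.Theory.
Set Implicit Arguments. Unset Strict Implicit. Unset Printing Implicit Defensive.
Local Open Scope ring_scope.

Record PreAddCat := {
  Ob :> Type;
  Hom : Ob -> Ob -> zmodType;
  comp : forall A B C : Ob, Hom B C -> Hom A B -> Hom A C;
  idm : forall A : Ob, Hom A A;
  compA : forall A B C D (h : Hom C D) (g : Hom B C) (f : Hom A B),
      comp h (comp g f) = comp (comp h g) f;
  comp1m : forall A B (f : Hom A B), comp (idm B) f = f;
  compm1 : forall A B (f : Hom A B), comp f (idm A) = f;
  compDl : forall A B C (g g' : Hom B C) (f : Hom A B),
      comp (g + g') f = comp g f + comp g' f;
  compDr : forall A B C (g : Hom B C) (f f' : Hom A B),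
      comp g (f + f') = comp g f + comp g f'
}.
Arguments Hom {p}.
Arguments comp {p A B C}.
Arguments idm {p}.
Notation "g \oc f" := (comp g f) (at level 40, left associativity).

Definition is_iso (C : PreAddCat) (A B : C) (f : Hom A B) :=
  exists g : Hom B A, g \oc f = idm A /\ f \oc g = idm B.
Definition isomorphic (C : PreAddCat) (A B : C) := exists f : Hom A B, is_iso f.

Definition is_zero_obj (C : PreAddCat) (Z : C) :=
  forall A : C, (forall f g : Hom Z A, f = g) /\ (forall f g : Hom A Z, f = g).

Definition is_biproduct (C : PreAddCat) (A B X : C)
    (i1 : Hom A X) (i2 : Hom B X) (p1 : Hom X A) (p2 : Hom X B) :=
  [/\ p1 \oc i1 = idm A, p2 \oc i2 = idm B, p1 \oc i2 = 0, p2 \oc i1 = 0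
    & i1 \oc p1 + i2 \oc p2 = idm X].

Definition direct_summand (C : PreAddCat) (A X : C) :=
  exists (B : C) (i1 : Hom A X) (i2 : Hom B X) (p1 : Hom X A) (p2 : Hom X B),
    is_biproduct i1 i2 p1 p2.

Record AddCat := {
  AC_base :> PreAddCat;
  zero_obj : AC_base;
  zero_objP : is_zero_obj zero_obj;
  biprod_ex : forall A B : AC_base, exists (X : AC_base) (i1 : Hom A X) (i2 : Hom B X)
      (p1 : Hom X A) (p2 : Hom X B), is_biproduct i1 i2 p1 p2
}.
Arguments zero_obj {a}.

Record PreTri := {
  PT_base :> AddCat;
  Sh : PT_base -> PT_base;
  shm : forall A B : PT_base, Hom A B -> Hom (Sh A) (Sh B);
  dist : forall X Y Z : PT_base, Hom X Y -> Hom Y Z -> Hom Z (Sh X) -> Prop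
}.
Arguments Sh {p}.
Arguments shm {p A B}.
Arguments dist {p X Y Z}.

Section TriAxioms.
Variable T : PreTri.

Definition shift_ax :=
  ((forall (A B C : T) (g : Hom B C) (f : Hom A B), shm (g \oc f) = shm g \oc shm f) /\
     (forall A : T, shm (idm A) = idm (Sh A)) /\
     (forall (A B : T) (f g : Hom A B), shm (f + g) = shm f + shm g) /\
     (forall (A B : T) (f g : Hom A B), shm f = shm g -> f = g) /\
     (forall (A B : T) (g : Hom (Sh A) (Sh B)), exists f, shm f = g) /\
     (forall Y : T, exists X : T, isomorphic (Sh X) Y)).

Definition TR1 :=
  [/\ (forall X : T, dist (idm X) (0 : Hom X zero_obj) (0 : Hom zero_obj (Sh X))),
      (forall (X Y Z X' Y' Z' : T) (f : Hom X Y) (g : Hom Y Z) (h : Hom Z (Sh X))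
         (f' : Hom X' Y') (g' : Hom Y' Z') (h' : Hom Z' (Sh X'))
         (a : Hom X X') (b : Hom Y Y') (c : Hom Z Z'),
         dist f g h -> is_iso a -> is_iso b -> is_iso c ->
         b \oc f = f' \oc a -> c \oc g = g' \oc b -> shm a \oc h = h' \oc c ->
         dist f' g' h')
    & (forall (X Y : T) (f : Hom X Y), exists (Z : T) (g : Hom Y Z) (h : Hom Z (Sh X)),
         dist f g h)].

Definition TR2 :=
  forall (X Y Z : T) (f : Hom X Y) (g : Hom Y Z) (h : Hom Z (Sh X)),
    dist f g h -> dist g h (- shm f).

Definition TR3 :=
  forall (X Y Z X' Y' Z' : T) (f : Hom X Y) (g : Hom Y Z) (h : Hom Z (Sh X))
    (f' : Hom X' Y') (g' : Hom Y' Z') (h' : Hom Z' (Sh X'))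
    (a : Hom X X') (b : Hom Y Y'),
    dist f g h -> dist f' g' h' -> b \oc f = f' \oc a ->
    exists c : Hom Z Z', c \oc g = g' \oc b /\ shm a \oc h = h' \oc c.

Definition TR4 :=
  forall (X Y Z Z' X' Y' : T) (f : Hom X Y) (g : Hom Y Z)
    (u : Hom Y Z') (u' : Hom Z' (Sh X))
    (v : Hom Z X') (v' : Hom X' (Sh Y))
    (w : Hom Z Y') (w' : Hom Y' (Sh X)),
    dist f u u' -> dist g v v' -> dist (g \oc f) w w' ->
    exists (a : Hom Z' Y') (b : Hom Y' X'),
      [/\ dist a b (shm u \oc v'), a \oc u = w \oc g, w' \oc a = u',
          b \oc w = v & v' \oc b = shm f \oc w'].
End TriAxioms.

Record TriCat := {
  TC_base :> PreTri;
  TC_shift : shift_ax TC_base;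
  TC_TR1 : TR1 TC_base;
  TC_TR2 : TR2 TC_base;
  TC_TR3 : TR3 TC_base;
  TC_TR4 : TR4 TC_base
}.

Record PreMDC := {
  PM_base :> TriCat;
  tens : PM_base -> PM_base -> PM_base;
  tensm : forall A A' B B' : PM_base, Hom A A' -> Hom B B' -> Hom (tens A B) (tens A' B');
  unit_obj : PM_base;
  assoc : forall A B C : PM_base, Hom (tens (tens A B) C) (tens A (tens B C));
  lunit : forall A : PM_base, Hom (tens unit_obj A) A;
  runit : forall A : PM_base, Hom (tens A unit_obj) A;
  (* structure isos making - (x) Y and Y (x) - exact (triangulated) functors *)
  phiL : forall X Y : PM_base, Hom (tens (Sh X) Y) (Sh (tens X Y));
  phiR : forall X Y : PM_base, Hom (tens X (Sh Y)) (Sh (tens X Y))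
}.
Arguments tens {p}.
Arguments tensm {p A A' B B'}.
Arguments unit_obj {p}.
Arguments assoc {p}.
Arguments lunit {p}.
Arguments runit {p}.
Arguments phiL {p}.
Arguments phiR {p}.
Notation "A \ot B" := (tens A B) (at level 45, left associativity).

Section MonAxioms.
Variable K : PreMDC.

Definition bifunctor_ax :=
  [/\ (forall (A A' A'' B B' B'' : K) (f : Hom A A') (f' : Hom A' A'')
          (g : Hom B B') (g' : Hom B' B''),
         tensm (f' \oc f) (g' \oc g) = tensm f' g' \oc tensm f g),
      (forall A B : K, tensm (idm A) (idm B) = idm (A \ot B)),
      (forall (A A' B B' : K) (f f' : Hom A A') (g : Hom B B'),
         tensm (f + f') g = tensm f g + tensm f' g)
    & (forall (A A' B B' : K) (f : Hom A A') (g g' : Hom B B'),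
         tensm f (g + g') = tensm f g + tensm f g')].

Definition monoidal_ax :=
  ((forall A B C : K, is_iso (assoc A B C)) /\
     (forall A : K, is_iso (lunit A)) /\
     (forall A : K, is_iso (runit A)) /\
     (forall (A A' B B' C C' : K) (f : Hom A A') (g : Hom B B') (h : Hom C C'),
         assoc A' B' C' \oc tensm (tensm f g) h = tensm f (tensm g h) \oc assoc A B C) /\
     (forall (A A' : K) (f : Hom A A'), lunit A' \oc tensm (idm unit_obj) f = f \oc lunit A) /\
     (forall (A A' : K) (f : Hom A A'), runit A' \oc tensm f (idm unit_obj) = f \oc runit A) /\
     (forall A B C D : K,
         assoc A B (C \ot D) \oc assoc (A \ot B) C D =
         tensm (idm A) (assoc B C D) \oc assoc A (B \ot C) D \oc tensm (assoc A B C) (idm D)) /\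
     (forall A B : K,
         tensm (idm A) (lunit B) \oc assoc A unit_obj B = tensm (runit A) (idm B))).

Definition exact_ax :=
  ((forall X Y : K, is_iso (phiL X Y)) /\
     (forall X Y : K, is_iso (phiR X Y)) /\
     (forall (X X' Y Y' : K) (f : Hom X X') (g : Hom Y Y'),
         phiL X' Y' \oc tensm (shm f) g = shm (tensm f g) \oc phiL X Y) /\
     (forall (X X' Y Y' : K) (f : Hom X X') (g : Hom Y Y'),
         phiR X' Y' \oc tensm f (shm g) = shm (tensm f g) \oc phiR X Y) /\
     (forall (Y X1 X2 X3 : K) (f : Hom X1 X2) (g : Hom X2 X3) (h : Hom X3 (Sh X1)),
         dist f g h ->
         dist (tensm f (idm Y)) (tensm g (idm Y)) (phiL X1 Y \oc tensm h (idm Y))) /\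
     (forall (Y X1 X2 X3 : K) (f : Hom X1 X2) (g : Hom X2 X3) (h : Hom X3 (Sh X1)),
         dist f g h ->
         dist (tensm (idm Y) f) (tensm (idm Y) g) (phiR Y X1 \oc tensm (idm Y) h))).
End MonAxioms.

Record MDC := {
  MDC_base :> PreMDC;
  MDC_bifunctor : bifunctor_ax MDC_base;
  MDC_monoidal : monoidal_ax MDC_base;
  MDC_exact : exact_ax MDC_base
}.

Section Spectrum.
Variable K : MDC.

Definition thick (S : K -> Prop) :=
  [/\ S zero_obj,
      (forall A B : K, S A -> isomorphic A B -> S B),
      (forall A : K, S A <-> S (Sh A)),
      (forall (X Y Z : K) (f : Hom X Y) (g : Hom Y Z) (h : Hom Z (Sh X)),
         dist f g h ->
         [/\ (S X -> S Y -> S Z), (S Y -> S Z -> S X) & (S Z -> S X -> S Y)])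
    & (forall A X : K, S X -> direct_summand A X -> S A)].

Definition thick_ideal (S : K -> Prop) :=
  thick S /\ (forall A B : K, S A -> S (A \ot B) /\ S (B \ot A)).

Definition prime_ideal (P : K -> Prop) :=
  [/\ thick_ideal P, (exists A : K, ~ P A)
    & (forall I J : K -> Prop, thick_ideal I -> thick_ideal J ->
         (forall A B : K, I A -> J B -> P (A \ot B)) ->
         (forall A, I A -> P A) \/ (forall B, J B -> P B))].

Definition thick_generated_by (G : K) :=
  forall S : K -> Prop, thick S -> S G -> forall A : K, S A.

Definition Spc := {P : K -> Prop | prime_ideal P}.

Definition Vsupp (A : K) : Spc -> Prop := fun P => ~ proj1_sig P A.

Definition Spc_closed (Z : Spc -> Prop) :=
  exists S : K -> Prop, forall P, Z P <-> (forall A, S A -> Vsupp A P).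

Definition Spc_open (U : Spc -> Prop) := Spc_closed (fun P => ~ U P).

Definition Spc_quasicompact (U : Spc -> Prop) :=
  forall (I : Type) (W : I -> Spc -> Prop),
    (forall i, Spc_open (W i)) -> (forall P, U P -> exists i, W i P) ->
    exists s : list I, forall P, U P -> exists i, List.In i s /\ W i P.
End Spectrum.

(* Main.v *)
Require Import Defs.
From mathcomp Require Import all_boot all_algebra.
From mathcomp Require classical_sets.
From Stdlib Require Import Classical FunctionalExtensionality PropExtensionality.
Import GRing.Theory.
Set Implicit Arguments. Unset Strict Implicit.

Section Basics.
Variable K : MDC.
Local Open Scope ring_scope.

Lemma comp0l (A B C : K) (f : Defs.Hom A B) : (0 : Defs.Hom B C) \oc f = 0.
Proof.
have h := compDl (0 : Defs.Hom B C) 0 f; rewrite addr0 in h.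
by apply/eqP; rewrite -(subrr ((0 : Defs.Hom B C) \oc f)) {2}h addrK.
Qed.

Lemma comp0r (A B C : K) (g : Defs.Hom B C) : g \oc (0 : Defs.Hom A B) = 0.
Proof.
have h := compDr g (0 : Defs.Hom A B) 0; rewrite addr0 in h.
by apply/eqP; rewrite -(subrr (g \oc (0 : Defs.Hom A B))) {2}h addrK.
Qed.

Lemma tcomp (A A' A'' B B' B'' : K) (f : Defs.Hom A A') (f' : Defs.Hom A' A'')
          (g : Defs.Hom B B') (g' : Defs.Hom B' B'') :
  tensm (f' \oc f) (g' \oc g) = tensm f' g' \oc tensm f g.
Proof. by case: (MDC_bifunctor K). Qed.

Lemma tid (A B : K) : tensm (idm A) (idm B) = idm (A \ot B).
Proof. by case: (MDC_bifunctor K). Qed.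

Lemma tDl (A A' B B' : K) (f f' : Defs.Hom A A') (g : Defs.Hom B B') :
  tensm (f + f') g = tensm f g + tensm f' g.
Proof. by case: (MDC_bifunctor K). Qed.

Lemma tDr (A A' B B' : K) (f : Defs.Hom A A') (g g' : Defs.Hom B B') :
  tensm f (g + g') = tensm f g + tensm f g'.
Proof. by case: (MDC_bifunctor K). Qed.

Lemma t0l (A A' B B' : K) (g : Defs.Hom B B') : tensm (0 : Defs.Hom A A') g = 0.
Proof.
have h := tDl (0 : Defs.Hom A A') 0 g; rewrite addr0 in h.
by apply/eqP; rewrite -(subrr (tensm (0 : Defs.Hom A A') g)) {2}h addrK.
Qed.

Lemma t0r (A A' B B' : K) (f : Defs.Hom A A') : tensm f (0 : Defs.Hom B B') = 0.
Proof.
have h := tDr f (0 : Defs.Hom B B') 0; rewrite addr0 in h.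
by apply/eqP; rewrite -(subrr (tensm f (0 : Defs.Hom B B'))) {2}h addrK.
Qed.

Lemma iso_refl (A : K) : isomorphic A A.
Proof. by exists (idm A), (idm A); rewrite comp1m. Qed.

Lemma iso_sym (A B : K) : isomorphic A B -> isomorphic B A.
Proof. by case=> f [g [h1 h2]]; exists g, f. Qed.

Lemma iso_trans (A B C : K) : isomorphic A B -> isomorphic B C -> isomorphic A C.
Proof.
case=> f [f' [h1 h2]] [g [g' [h3 h4]]]; exists (g \oc f), (f' \oc g'); split.
  by rewrite Defs.compA -(Defs.compA f') h3 compm1.
by rewrite Defs.compA -(Defs.compA g) h2 compm1.
Qed.

Lemma iso_tens (A A' B B' : K) (f : Defs.Hom A A') (g : Defs.Hom B B') :
  is_iso f -> is_iso g -> is_iso (tensm f g).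
Proof.
case=> f' [h1 h2] [g' [h3 h4]]; exists (tensm f' g').
by rewrite -!tcomp h1 h2 h3 h4 !tid.
Qed.

Lemma isoR (A B Y : K) : isomorphic A B -> isomorphic (A \ot Y) (B \ot Y).
Proof.
case=> f hf; exists (tensm f (idm Y)); apply: iso_tens => //.
by exists (idm Y); rewrite comp1m.
Qed.

Lemma isoL (A B Y : K) : isomorphic A B -> isomorphic (Y \ot A) (Y \ot B).
Proof.
case=> f hf; exists (tensm (idm Y) f); apply: iso_tens => //.
by exists (idm Y); rewrite comp1m.
Qed.

Lemma zero_idm (Z : K) : is_zero_obj Z -> idm Z = 0.
Proof. by move=> hZ; case: (hZ Z) => h _; apply: h. Qed.

Lemma zero_iso (Z Z' : K) : is_zero_obj Z -> idm Z' = 0 -> isomorphic Z Z'.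
Proof.
move=> hZ h; exists 0, 0; split.
  by rewrite comp0l (zero_idm hZ).
by rewrite comp0l h.
Qed.

Lemma zeroR (Y : K) : isomorphic zero_obj (zero_obj \ot Y).
Proof.
apply: zero_iso; first exact: zero_objP.
by rewrite -tid (zero_idm (@zero_objP K)) t0l.
Qed.

Lemma zeroL (Y : K) : isomorphic zero_obj (Y \ot zero_obj).
Proof.
apply: zero_iso; first exact: zero_objP.
by rewrite -tid (zero_idm (@zero_objP K)) t0r.
Qed.

Lemma assoc_iso (A B C : K) : isomorphic ((A \ot B) \ot C) (A \ot (B \ot C)).
Proof. case: (MDC_monoidal K) => h _; by exists (assoc A B C). Qed.

Lemma lunit_iso (A : K) : isomorphic (unit_obj \ot A) A.
Proof. case: (MDC_monoidal K) => _ [h _]; by exists (lunit A). Qed.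

Lemma runit_iso (A : K) : isomorphic (A \ot unit_obj) A.
Proof. case: (MDC_monoidal K) => _ [_ [h _]]; by exists (runit A). Qed.

Lemma phiL_iso (X Y : K) : isomorphic (Sh X \ot Y) (Sh (X \ot Y)).
Proof. case: (MDC_exact K) => h _; by exists (phiL X Y). Qed.

Lemma phiR_iso (X Y : K) : isomorphic (X \ot Sh Y) (Sh (X \ot Y)).
Proof. case: (MDC_exact K) => _ [h _]; by exists (phiR X Y). Qed.

Lemma summandR (A X Y : K) : direct_summand A X -> direct_summand (A \ot Y) (X \ot Y).
Proof.
case=> B [i1 [i2 [p1 [p2 [h1 h2 h3 h4 h5]]]]].
exists (B \ot Y), (tensm i1 (idm Y)), (tensm i2 (idm Y)), (tensm p1 (idm Y)),
  (tensm p2 (idm Y)).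
split; rewrite -?tcomp ?comp1m ?h1 ?h2 ?h3 ?h4 ?tid ?t0l //.
by rewrite -tDl h5 tid.
Qed.

Lemma summandL (A X Y : K) : direct_summand A X -> direct_summand (Y \ot A) (Y \ot X).
Proof.
case=> B [i1 [i2 [p1 [p2 [h1 h2 h3 h4 h5]]]]].
exists (Y \ot B), (tensm (idm Y) i1), (tensm (idm Y) i2), (tensm (idm Y) p1),
  (tensm (idm Y) p2).
split; rewrite -?tcomp ?comp1m ?h1 ?h2 ?h3 ?h4 ?tid ?t0r //.
by rewrite -tDr h5 tid.
Qed.

Lemma thick_iso (S : K -> Prop) A B : thick S -> S A -> isomorphic A B -> S B.
Proof. by case=> _ h _ _ _; apply: h. Qed.

Lemma thick_preR (S : K -> Prop) (Y : K) : thick S -> thick (fun x => S (x \ot Y)).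
Proof.
case=> S0 Siso Ssh Sd Ssum; split.
- exact: Siso S0 (zeroR Y).
- by move=> A B hA hAB; apply: Siso hA (isoR Y hAB).
- move=> A; rewrite Ssh; split=> h.
    by apply: Siso h _; apply/iso_sym/phiL_iso.
  by apply: Siso h _; apply/phiL_iso.
- move=> X1 X2 X3 f g h hd.
  case: (MDC_exact K) => _ [_ [_ [_ [hE _]]]].
  exact: Sd _ _ _ _ _ _ (hE Y _ _ _ _ _ _ hd).
- by move=> A X hX hs; apply: Ssum hX (summandR Y hs).
Qed.

Lemma thick_preL (S : K -> Prop) (Y : K) : thick S -> thick (fun x => S (Y \ot x)).
Proof.
case=> S0 Siso Ssh Sd Ssum; split.
- exact: Siso S0 (zeroL Y).
- by move=> A B hA hAB; apply: Siso hA (isoL Y hAB).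
- move=> A; rewrite Ssh; split=> h.
    by apply: Siso h _; apply/iso_sym/phiR_iso.
  by apply: Siso h _; apply/phiR_iso.
- move=> X1 X2 X3 f g h hd.
  case: (MDC_exact K) => _ [_ [_ [_ [_ hE]]]].
  exact: Sd _ _ _ _ _ _ (hE Y _ _ _ _ _ _ hd).
- by move=> A X hX hs; apply: Ssum hX (summandL Y hs).
Qed.

Lemma thick_inter (I : Type) (R : I -> Prop) (F : I -> K -> Prop) :
  (forall i, R i -> thick (F i)) -> thick (fun x => forall i, R i -> F i x).
Proof.
move=> hF; split.
- by move=> i hi; case: (hF i hi).
- by move=> A B hA hAB i hi; case: (hF i hi) => _ h _ _ _; apply: h (hA i hi) hAB.
- move=> A; split=> hA i hi; case: (hF i hi) => _ _ h _ _; move: (hA i hi) (h A); tauto.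
- move=> X Y Z f g h hd; split=> h1 h2 i hi; case: (hF i hi) => _ _ _ hD _;
    case: (hD _ _ _ _ _ _ hd) => a b c.
  + exact: a (h1 i hi) (h2 i hi).
  + exact: b (h1 i hi) (h2 i hi).
  + exact: c (h1 i hi) (h2 i hi).
- by move=> A X hX hs i hi; case: (hF i hi) => _ _ _ _ h; apply: h (hX i hi) hs.
Qed.

End Basics.

Section Ideals.
Variable K : MDC.

Lemma thick_ext (S T : K -> Prop) : (forall x, S x <-> T x) -> thick S -> thick T.
Proof.
move=> e [S0 Siso Ssh Sd Ssum]; split.
- by apply/e.
- by move=> A B /e hA hAB; apply/e; apply: Siso hA hAB.
- by move=> A; rewrite -!e.
- move=> X Y Z f g h hd; case: (Sd _ _ _ _ _ _ hd) => a b c; split;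
    rewrite -!e; [exact: a|exact: b|exact: c].
- by move=> A X /e hX hs; apply/e; apply: Ssum hX hs.
Qed.

Lemma thick_all (I : Type) (F : I -> K -> Prop) :
  (forall i, thick (F i)) -> thick (fun x => forall i, F i x).
Proof.
move=> hF; apply: (thick_ext (S := fun x => forall i, True -> F i x)).
  by move=> x; split=> h i //; apply: h.
by apply: thick_inter => i _; apply: hF.
Qed.

Lemma idealR (T : K -> Prop) x Z : thick_ideal T -> T x -> T (x \ot Z).
Proof. by case=> _ h hx; case: (h _ Z hx). Qed.
Lemma idealL (T : K -> Prop) x Z : thick_ideal T -> T x -> T (Z \ot x).
Proof. by case=> _ h hx; case: (h _ Z hx). Qed.

Definition gen (S : K -> Prop) : K -> Prop :=
  fun x => forall T, (thick T /\ (forall y, S y -> T y)) -> T x.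

Lemma gen_thick S : thick (gen S).
Proof. by apply: thick_inter => T []. Qed.

Lemma gen_sub (S : K -> Prop) y : S y -> gen S y.
Proof. by move=> hy T [_ h]; apply: h. Qed.

Lemma gen_min (S T : K -> Prop) : thick T -> (forall y, S y -> T y) ->
  forall x, gen S x -> T x.
Proof. by move=> tT h x hx; apply: hx. Qed.

Lemma gen_ideal (S : K -> Prop) :
  (forall x Z, S x -> S (x \ot Z) /\ S (Z \ot x)) -> thick_ideal (gen S).
Proof.
move=> hS; split; first exact: gen_thick.
move=> x Z hx; split.
- apply: (gen_min (T := fun x => gen S (x \ot Z))) hx.
    exact: thick_preR Z (gen_thick S).
  by move=> y hy; apply: gen_sub; case: (hS y Z hy).
- apply: (gen_min (T := fun x => gen S (Z \ot x))) hx.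
    exact: thick_preL Z (gen_thick S).
  by move=> y hy; apply: gen_sub; case: (hS y Z hy).
Qed.

Definition idl (A : K) : K -> Prop :=
  fun x => forall T, thick_ideal T -> T A -> T x.

Lemma idl_ideal A : thick_ideal (idl A).
Proof.
split.
  apply: (thick_ext (S := fun x => forall T, (thick_ideal T /\ T A) -> T x)).
    by move=> x; split=> h T; [move=> hT hA; apply: h|case; apply: h].
  by apply: thick_inter => T [[]].
move=> x Z hx; split=> T hT hA.
  exact: idealR hT (hx T hT hA).
exact: idealL hT (hx T hT hA).
Qed.

Lemma idl_self A : idl A A.
Proof. by move=> T. Qed.

Lemma Gprime (G : K) (hG : thick_generated_by G) (P : K -> Prop) :
  prime_ideal P -> forall x y, P ((x \ot G) \ot y) -> P x \/ P y.
Proof.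
move=> [[tP iP] _ pP] x y hxy.
have h1 : forall C, P ((x \ot C) \ot y).
  apply: (hG (fun C => P ((x \ot C) \ot y))) => //.
  exact: (thick_preL x (thick_preR y tP)).
pose I := fun u => forall C, P ((u \ot C) \ot y).
have tI : thick_ideal I.
  split.
    apply: (thick_all (F := fun C u => P ((u \ot C) \ot y))) => C.
    exact: (thick_preR C (thick_preR y tP)).
  move=> u Z hu; split=> C.
    exact: thick_iso tP (hu _) (isoR y (iso_sym (assoc_iso u Z C))).
  apply: thick_iso tP ((iP _ Z (hu C)).2) _.
  exact: iso_trans (iso_sym (assoc_iso Z (u \ot C) y))
                   (isoR y (iso_sym (assoc_iso Z u C))).
pose J := fun v => forall u, I u -> P (u \ot v).
have tJ : thick_ideal J.
  split.
    exact: (thick_inter (R := I) (F := fun u v => P (u \ot v)))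
             (fun u _ => thick_preL u tP).
  move=> v Z hv; split=> u hu.
    exact: thick_iso tP ((iP _ Z (hv u hu)).1) (assoc_iso u v Z).
  exact: thick_iso tP (hv (u \ot Z) (idealR Z tI hu)) (assoc_iso u Z v).
case: (pP I J tI tJ (fun a b ha hb => hb a ha)) => [hI|hJ].
  by left; apply: hI.
right; apply: hJ => u hu.
exact: thick_iso tP (hu unit_obj) (isoR y (runit_iso u)).
Qed.

Lemma prime_not_unit (P : K -> Prop) : prime_ideal P -> ~ P unit_obj.
Proof.
move=> [[tP iP] [A hA] _] h1; apply: hA.
exact: thick_iso tP ((iP _ A h1).1) (lunit_iso A).
Qed.

Lemma chain_union (F : (K -> Prop) -> Prop) (X0 : K -> Prop) :
  F X0 -> thick_ideal X0 ->
  (forall X x, F X -> X x -> thick_ideal X) ->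
  (forall X Y, F X -> F Y -> (forall x, X x -> Y x) \/ (forall x, Y x -> X x)) ->
  thick_ideal (fun x => exists X, F X /\ X x).
Proof.
move=> FX0 tX0 hF tot.
have two : forall a b, (exists X, F X /\ X a) -> (exists X, F X /\ X b) ->
    exists X, [/\ F X, X a, X b & thick_ideal X].
  move=> a b [X [FX Xa]] [Y [FY Yb]].
  case: (tot X Y FX FY) => s.
    by exists Y; split => //; [apply: s | exact: hF Yb].
  by exists X; split => //; [apply: s | exact: hF Xa].
split; first split.
- by exists X0; split => //; case: tX0 => -[].
- move=> A B [X [FX XA]] hAB; exists X; split => //.
  by case: (hF _ _ FX XA) => tX _; apply: thick_iso tX XA hAB.
- move=> A; split=> -[X [FX XA]]; exists X; split => //;
    case: (hF _ _ FX XA) => -[_ _ h _ _] _; [by rewrite -h | by rewrite h].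
- move=> X Y Z f g h hd; split=> ha hb.
  + case: (two _ _ ha hb) => W [FW Wa Wb [[_ _ _ hD _] _]].
    by exists W; split => //; case: (hD _ _ _ _ _ _ hd) => c _ _; apply: c.
  + case: (two _ _ ha hb) => W [FW Wa Wb [[_ _ _ hD _] _]].
    by exists W; split => //; case: (hD _ _ _ _ _ _ hd) => _ c _; apply: c.
  + case: (two _ _ ha hb) => W [FW Wa Wb [[_ _ _ hD _] _]].
    by exists W; split => //; case: (hD _ _ _ _ _ _ hd) => _ _ c; apply: c.
- move=> A X [W [FW WX]] hs; exists W; split => //.
  by case: (hF _ _ FW WX) => -[_ _ _ _ h] _; apply: h WX hs.
- move=> A B [W [FW WA]]; split; exists W; split => //.
    exact: idealR (hF _ _ FW WA) WA.
  exact: idealL (hF _ _ FW WA) WA.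
Qed.

End Ideals.

Inductive Mc (K : MDC) (I : Type) (S' : I -> K -> Prop) (G : K) : K -> list I -> Prop :=
| mc_base i B : S' i B -> Mc S' G B (cons i nil)
| mc_prod m l m' l' : Mc S' G m l -> Mc S' G m' l' ->
    Mc S' G ((m \ot G) \ot m') (List.app l l').

Theorem mainTheorem15 (K : MDC) (G : K) (hG : thick_generated_by G)
    (U : Spc K -> Prop) :
  (Spc_open U /\ Spc_quasicompact U) <->
  exists A : K, forall P : Spc K, U P <-> ~ Vsupp A P.
Proof.
split.
- case=> -[S hS] qc.
  have hU : forall P, U P <-> exists B, S B /\ proj1_sig P B.
    move=> P; split.
      move=> u; apply: NNPP => n; apply: ((hS P).2 _ u) => B SB PB.
      by apply: n; exists B.
    move=> [B [SB PB]]; apply: NNPP => n; exact: (hS P).1 n B SB PB.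
  pose Ii := {B : K | S B}.
  pose W := fun (i : Ii) (P : Spc K) => proj1_sig P (proj1_sig i).
  have [] := qc Ii W.
  + move=> i; exists (fun B => B = proj1_sig i) => P; split.
      by move=> nW A ->.
    by move=> h; apply: (h _ erefl).
  + by move=> P /hU [B [SB PB]]; exists (exist _ B SB).
  move=> s hs.
  pose fold := foldr (fun i acc => (proj1_sig i \ot G) \ot acc) unit_obj s.
  have key : forall P : Spc K, proj1_sig P fold <->
      exists i, List.In i s /\ proj1_sig P (proj1_sig i).
    move=> [P pP] /=; rewrite /fold; clear hs fold.
    elim: s => [|a s IH] /=.
      split; first by move=> h; exfalso; exact: prime_not_unit pP h.
      by case=> i [[]].
    have tP : thick_ideal P by case: pP.
    split.
      move=> h0; case: (Gprime hG pP h0) => h.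
        by exists a; split => //; left.
      by case/IH: h => i [hi Pi]; exists i; split => //; right.
    case=> i [[<-|hi] Pi].
      exact: idealR _ tP (idealR _ tP Pi).
    by apply: idealL _ tP _; apply/IH; exists i.
  exists fold => P; rewrite /Vsupp; split.
    move=> u; case: (hs P u) => i [hi Wi] nP; apply: nP; apply/key.
    by exists i.
  move=> nn; have /key [i [_ Pi]] := NNPP _ nn.
  by apply/hU; exists (proj1_sig i); split => //; exact: proj2_sig i.
- case=> A hA.
  have hA' : forall P, U P <-> proj1_sig P A.
    move=> P; rewrite hA /Vsupp; split; [exact: NNPP | by move=> h n].
  split.
    exists (fun B => B = A) => P; split.
      by move=> nU B -> /hA'.
    by move=> h /hA'; apply: h.
  move=> I W hW hcov.
  pose S' i B := forall P : Spc K, ~ W i P -> ~ proj1_sig P B.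
  have Wsome : forall i P, W i P -> exists B, S' i B /\ proj1_sig P B.
    move=> i P w; apply: NNPP => n; case: (hW i) => Si hSi.
    apply: ((hSi P).2 _ w) => B SiB PB; apply: n; exists B; split => //.
    by move=> P' nW; exact: (hSi P').1 nW B SiB.
  have key : forall m l, Mc S' G m l -> forall P : Spc K, proj1_sig P m ->
      exists i, List.In i l /\ W i P.
    move=> m l; elim=> [i B hB|m1 l1 m2 l2 _ IH1 _ IH2] P Pm.
      exists i; split; first by left.
      by apply: NNPP => n; exact: hB P n Pm.
    case: (Gprime hG (proj2_sig P) Pm) => h.
      by case: (IH1 P h) => i [hi wi]; exists i; split => //; apply: List.in_or_app; left.
    by case: (IH2 P h) => i [hi wi]; exists i; split => //; apply: List.in_or_app; right.
  case: (classic (exists m l, Mc S' G m l /\ idl A m)).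
    move=> [m [l [hm hi]]]; exists l => P u; apply: (key _ _ hm P).
    by apply: hi; [case: (proj2_sig P) | apply/hA'].
  move=> nm; exists nil => P u; exfalso.
  have [i0 w0] := hcov P u.
  have [B0 [SB0 _]] := Wsome _ _ w0.
  pose Fam (Q : K -> Prop) :=
    thick_ideal Q /\ Q A /\ forall m l, Mc S' G m l -> ~ Q m.
  have [|Q [PQ maxQ]] := classical_sets.Zorn_bigcup
     (P := fun X => Fam X \/ (forall x, ~ X x)).
  {
    move=> F sub tot.
    have -> : classical_sets.bigcup F id = (fun x => exists X, F X /\ X x).
      apply: functional_extensionality => x; apply: propositional_extensionality.
      by split=> [[X FX Xx]|[X [FX Xx]]]; exists X.
    case: (classic (exists X0, F X0 /\ Fam X0)).
      move=> [X0 [FX0 [tX0 [X0A av0]]]]; left; split.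
        apply: (chain_union FX0 tX0).
          by move=> X x FX Xx; case: (sub X FX) => [[]|h] //; exfalso; exact: h x Xx.
        move=> X Y FX FY; exact: tot X Y FX FY.
      split; first by exists X0.
      move=> m l hm [X [FX Xm]]; case: (sub X FX) => [[_ [_ h]]|h].
        exact: h hm Xm.
      exact: h m Xm.
    move=> n; right => x [X [FX Xx]]; case: (sub X FX) => [fX|h].
      by apply: n; exists X.
    exact: h x Xx. }
  have famQ : Fam Q.
    case: PQ => // emp; exfalso; apply: (maxQ (idl A)).
      split; first by move=> x Qx; exfalso; exact: emp x Qx.
      move=> h; apply: (emp A); apply: h; exact: idl_self.
    left; split; first exact: idl_ideal.
    split; first exact: idl_self.
    by move=> m l hm hi; apply: nm; exists m, l.
  case: famQ => tQ [QA avQ].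
  have tQ' : thick Q by case: tQ.
  have max' : forall X, thick_ideal X -> X A -> (forall x, Q x -> X x) ->
      forall x, X x -> ~ Q x -> exists m l, Mc S' G m l /\ X m.
    move=> X tX XA sub x Xx nQx; apply: NNPP => n; apply: (maxQ X).
      by split => // h; exact: nQx (h x Xx).
    left; split => //; split => // m l hm Xm; by apply: n; exists m, l.
  have primeQ : prime_ideal Q.
    split => //; first by exists B0; exact: avQ _ _ (mc_base G SB0).
    move=> I1 J1 tI tJ hIJ.
    case: (classic (forall a, I1 a -> Q a)) => hI; first by left.
    case: (classic (forall b, J1 b -> Q b)) => hJ; first by right.
    exfalso.
    have [a [Ia nQa]] : exists a, I1 a /\ ~ Q a.
      apply: NNPP => n; apply: hI => a Ia; apply: NNPP => q0; by apply: n; exists a.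
    have [b [Jb nQb]] : exists b, J1 b /\ ~ Q b.
      apply: NNPP => n; apply: hJ => b Jb; apply: NNPP => q0; by apply: n; exists b.
    pose Qa := gen (fun x => Q x \/ I1 x).
    pose Qb := gen (fun x => Q x \/ J1 x).
    have tQa : thick_ideal Qa.
      apply: gen_ideal => x Z [Qx|Ix]; split.
      - by left; exact: idealR _ tQ Qx.
      - by left; exact: idealL _ tQ Qx.
      - by right; exact: idealR _ tI Ix.
      - by right; exact: idealL _ tI Ix.
    have tQb : thick_ideal Qb.
      apply: gen_ideal => x Z [Qx|Ix]; split.
      - by left; exact: idealR _ tQ Qx.
      - by left; exact: idealL _ tQ Qx.
      - by right; exact: idealR _ tJ Ix.
      - by right; exact: idealL _ tJ Ix.
    have [m [l [hm Qam]]] := max' Qa tQa (gen_sub (or_introl QA))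
        (fun x Qx => gen_sub (or_introl Qx)) a (gen_sub (or_intror Ia)) nQa.
    have [m' [l' [hm' Qbm']]] := max' Qb tQb (gen_sub (or_introl QA))
        (fun x Qx => gen_sub (or_introl Qx)) b (gen_sub (or_intror Jb)) nQb.
    have X1 : forall x, Qa x -> forall y, Qb y -> Q ((x \ot G) \ot y).
      apply: gen_min.
        exact: (thick_inter (R := Qb) (F := fun y x => Q ((x \ot G) \ot y)))
                 (fun y _ => thick_preR G (thick_preR y tQ')).
      move=> x [Qx|Ix] y Qby.
        exact: idealR _ tQ (idealR _ tQ Qx).
      apply: (gen_min (T := fun y => Q ((x \ot G) \ot y))) Qby.
        exact: thick_preL (x \ot G) tQ'.
      move=> z [Qz|Jz].
        exact: idealL _ tQ Qz.
      exact: hIJ _ _ (idealR G tI Ix) Jz.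
    exact: avQ _ _ (mc_prod hm hm') (X1 _ Qam _ Qbm').
  pose PQ' := exist _ Q primeQ : Spc K.
  have [i1 w1] := hcov PQ' (proj2 (hA' PQ') QA).
  have [B1 [SB1 QB1]] := Wsome _ _ w1.
  exact: avQ _ _ (mc_base G SB1) QB1.
Qed.
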